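(* There is a universal constant $C_{\mathrm{hg}}>1$ such that the following holds. Let $A$ be an $m_1\times m_2$ random matrix with i.i.d. Bernoulli$(p)$ entries, $p\in(0,1)$, let $\vec b=(b_1,\dots,b_{m_2})\in\{0,1,\dots,m_1\}^{m_2}$, and let $\Omega_{\vec b}(A)$ be the event that $|\mathrm{supp}(\mathbf C_i(A))|=b_i$ for all $i\in[m_2]$. Let $\emptyset\ne J_1\subset J_2\subset[m_2]$ and $r>0$ be such that $|\{j\in J_1:b_j\ge r\}|\ge|J_1|/2$ and $r\ge |J_2|\cdot\frac{24\|\vec b\|_\infty^2}{m_1}$. Then $$\mathbb{P}\Big\{|I_A(J_1,J_2)|<\frac{|J_1|r}{4}\ \Big|\ \Omega_{\vec b}(A)\Big\}\le C_{\mathrm{hg}}^{|J_1|/2}\exp\Big(-\log\Big(\frac{r}{24|J_2|\|\vec b\|_\infty^2/m_1}\Big)\frac{r|J_1|}{8}\Big).$$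
   Context: $\mathbf C_i(A)$ is the $i$-th column of $A$, $\mathrm{supp}$ the set of indices of nonzero entries, $\|\vec b\|_\infty=\max_i b_i$. For $J_1\subset J_2\subset[m_2]$, $I_A(J_1,J_2)=\{i\in[m_1]:\exists j_0\in J_1\text{ with }a_{ij_0}=1\text{ and }a_{ij}=0\text{ for all }j\in J_2\setminus\{j_0\}\}$. Conditioned on $\Omega_{\vec b}(A)$, the columns are independent and the support of column $i$ is uniform among $b_i$-subsets of $[m_1]$. *)

(* Defs.v *)
From HB Require Import structures.
From mathcomp Require Import all_boot all_order all_algebra.
From mathcomp Require Import all_classical all_reals all_analysis.
Set Implicit Arguments. Unset Strict Implicit. Unset Printing Implicit Defensive.
Import Order.TTheory GRing.Theory Num.Theory.
Local Open Scope ring_scope.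

Definition bern_weight (R : realType) (m1 m2 : nat) (p : R)
  (A : 'M[bool]_(m1, m2)) : R :=
  \prod_(i : 'I_m1) \prod_(j : 'I_m2) (if A i j then p else 1 - p).

Definition bern_prob (R : realType) (m1 m2 : nat) (p : R)
  (E : pred 'M[bool]_(m1, m2)) : R :=
  \sum_(A | E A) bern_weight p A.

Definition bern_cond_prob (R : realType) (m1 m2 : nat) (p : R)
  (E F : pred 'M[bool]_(m1, m2)) : R :=
  bern_prob p [pred A | E A && F A] / bern_prob p F.

Definition col_supp (m1 m2 : nat) (A : 'M[bool]_(m1, m2)) (i : 'I_m2)
  : {set 'I_m1} := [set k | A k i].

Definition Omega_b (m1 m2 : nat) (b : 'I_m2 -> nat) : pred 'M[bool]_(m1, m2) :=
  [pred A | [forall i, #|col_supp A i| == b i]].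

Definition I_A (m1 m2 : nat) (A : 'M[bool]_(m1, m2)) (J1 J2 : {set 'I_m2})
  : {set 'I_m1} :=
  [set i | [exists j0 in J1, A i j0 && [forall j in J2, (j != j0) ==> ~~ A i j]]].

Definition bmax (m2 : nat) (b : 'I_m2 -> nat) : nat := \max_(i : 'I_m2) b i.

(* Main.v *)
Require Import Defs.
From HB Require Import structures.
From mathcomp Require Import all_boot all_order all_algebra.
From mathcomp Require Import all_classical all_reals all_analysis.
From mathcomp Require Import zify ring lra.
Import Order.TTheory GRing.Theory Num.Theory.
Local Open Scope ring_scope.
Set Implicit Arguments. Unset Strict Implicit. Unset Printing Implicit Defensive.

Section Upd.
Variables m1 m2 : nat.
Definition updc (A : 'M[bool]_(m1, m2)) (j : 'I_m2) (S : {set 'I_m1}) : 'M[bool]_(m1, m2) :=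
  \matrix_(i, j') if j' == j then i \in S else A i j'.

Lemma col_updc_eq A j S : col_supp (updc A j S) j = S.
Proof. by apply/setP => i; rewrite !inE mxE eqxx. Qed.

Lemma col_updc_neq A j S j' : j' != j -> col_supp (updc A j S) j' = col_supp A j'.
Proof. by move=> /negbTE h; apply/setP => i; rewrite !inE mxE h. Qed.

Lemma updcK A j S T : updc (updc A j S) j T = updc A j T.
Proof. by apply/matrixP => i j'; rewrite !mxE; case: eqP. Qed.

Lemma updc_id A j S : (updc A j S == A) = (col_supp A j == S).
Proof.
apply/eqP/eqP => [<-|<-]; first by rewrite col_updc_eq.
by apply/matrixP => i j'; rewrite !mxE; case: eqP => // ->; rewrite inE.
Qed.

Lemma Omega_updc (b : 'I_m2 -> nat) A j (S : {set 'I_m1}) :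
  Omega_b b A -> #|S| = b j -> Omega_b b (updc A j S).
Proof.
move=> /forallP hA hS; apply/forallP => j'.
have [->|ne] := eqVneq j' j; first by rewrite col_updc_eq hS.
by rewrite col_updc_neq.
Qed.

Lemma Omega_updc_rev (b : 'I_m2 -> nat) A j (S : {set 'I_m1}) :
  Omega_b b (updc A j S) -> #|col_supp A j| = b j -> Omega_b b A.
Proof.
move=> /forallP hA hS; apply/forallP => j'.
have [->|ne] := eqVneq j' j; first by rewrite hS.
by rewrite -(col_updc_neq A S ne).
Qed.

Lemma fubini_col (R : realType) (b : 'I_m2 -> nat) (G : 'M[bool]_(m1, m2) -> R) j :
  \sum_(A | Omega_b b A) G A * #|[set S : {set 'I_m1} | #|S| == b j]|%:R =
  \sum_(A | Omega_b b A) \sum_(S in [set S : {set 'I_m1} | #|S| == b j]) G (updc A j S).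
Proof.
set P := [set S : {set 'I_m1} | #|S| == b j].
have key : forall S T, S \in P -> T \in P ->
  \sum_(A | Omega_b b A && (col_supp A j == T)) G (updc A j S) =
  \sum_(A | Omega_b b A && (col_supp A j == S)) G A.
  move=> S T; rewrite !inE => /eqP hS /eqP hT.
  rewrite (reindex_onto (fun A' => updc A' j T) (fun A => updc A j S)) /=; last first.
    by move=> A /andP[_ /eqP hA]; rewrite updcK; apply/eqP; rewrite updc_id hA.
  apply: eq_big => A.
    rewrite updcK col_updc_eq eqxx andbT updc_id.
    apply/andP/andP => [[h1 h2]|[h1 h2]]; split => //.
      by apply: (Omega_updc_rev h1); rewrite (eqP h2).
    by apply: Omega_updc.
  by move=> /andP[_]; rewrite updcK => /eqP ->.
rewrite exchange_big /=.
rewrite (partition_big (fun A => col_supp A j) (mem P)) /=; last first.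
  by move=> A; rewrite /Omega_b inE => /forallP hA; rewrite inE (eqP (hA j)).
apply: eq_bigr => S SP.
rewrite [RHS](partition_big (fun A => col_supp A j) (mem P)) /=; last first.
  by move=> A; rewrite /Omega_b inE => /forallP hA; rewrite inE (eqP (hA j)).
rewrite [RHS](eq_bigr (fun _ => \sum_(A | Omega_b b A && (col_supp A j == S)) G A)); last first.
  by move=> T TP; rewrite key.
rewrite sumr_const -big_distrl /= mulr_natr.
by rewrite -[#|P|]/(#|[pred x in P]|).
Qed.
End Upd.

Lemma sum_subsets (R : comNzRingType) (T : finType) (V : {set T}) (x : R) :
  \sum_(U : {set T} | U \subset V) x ^+ #|U| = (1 + x) ^+ #|V|.
Proof.
rewrite -prodr_const [RHS]big_mkcond /=.
have -> : \prod_i (if i \in V then 1 + x else 1) =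
          \prod_i ((if i \in V then x else 0) + 1).
  by apply: eq_bigr => i _; case: (i \in V); rewrite ?add0r // addrC.
rewrite bigA_distr /= [LHS]big_mkcond /=.
apply: eq_bigr => U _.
rewrite -big_mkcond /=.
case: ifPn => sUV.
  by rewrite -prodr_const; apply: eq_bigr => i iU; rewrite (fintype.subsetP sUV).
have [i /andP[iU iV]] : exists i, (i \in U) && (i \notin V).
  case/fintype.subsetPn: sUV => i iU iV; by exists i; rewrite iU.
by rewrite (bigD1 i) //= (negbTE iV) mul0r.
Qed.

Lemma binom_ratio_nat m1 b u : (u <= b)%N -> (b <= m1)%N ->
  ('C(m1 - u, b - u) * m1 ^ u <= 'C(m1, b) * b ^ u)%N.
Proof.
move=> + bm; elim: u => [|u IH] ub; first by rewrite !subn0 !expn0.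
have ub' : (u <= b)%N by apply: ltnW.
have := IH ub'.
have hd := mul_bin_diag (m1 - u) (b - u.+1).
have e1 : ((m1 - u).-1 = m1 - u.+1)%N by lia.
have e2 : ((b - u.+1).+1 = b - u)%N by lia.
rewrite e1 e2 in hd.
have pos : (0 < m1 - u)%N by lia.
move=> H.
rewrite -(leq_pmul2l pos) !expnS.
set C1 := 'C(m1 - u.+1, b - u.+1) in hd *.
set C0 := 'C(m1 - u, b - u) in hd H *.
set C := 'C(m1, b) in H *.
have : ((m1 - u) * (C1 * (m1 * m1 ^ u)) = (b - u) * m1 * (C0 * m1 ^ u))%N.
  by rewrite mulnA hd; lia.
move=> ->.
have h2 : ((b - u) * m1 <= (m1 - u) * b)%N by nia.
apply: (leq_trans (leq_mul h2 H)).
rewrite mulnCA mulnA mulnA. lia.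
Qed.

Lemma count_sup_nat m1 (U : {set 'I_m1}) b : (#|U| <= b)%N ->
  (#|[set S : {set 'I_m1} | (#|S| == b) && (U \subset S)]| <= 'C(m1 - #|U|, b - #|U|))%N.
Proof.
move=> Ub.
set X := [set S : {set 'I_m1} | _].
have inj : {in X &, injective (fun S => S :\: U)}.
  move=> S S'; rewrite !inE => /andP[_ hS] /andP[_ hS'] e.
  by rewrite -(finset.setID S U) -(finset.setID S' U) (finset.setIidPr hS) (finset.setIidPr hS') e.
rewrite -(card_in_imset inj).
have -> : 'C(m1 - #|U|, b - #|U|) = #|[set W : {set 'I_m1} | W \subset ~: U & #|W| == (b - #|U|)%N]|.
  by rewrite cards_draws [#|~: U|]cardsCs finset.setCK card_ord.
apply: subset_leq_card; apply/fintype.subsetP => W /imsetP[S SX ->]; move: SX; rewrite /X !inE => /andP[/eqP hS sUS].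
apply/andP; split.
  by apply/fintype.subsetP => i; rewrite !inE => /andP[].
by rewrite cardsD (finset.setIidPr sUS) hS.
Qed.

Lemma count_sup_le0 m1 (U : {set 'I_m1}) b : (b < #|U|)%N ->
  #|[set S : {set 'I_m1} | (#|S| == b) && (U \subset S)]| = 0%N.
Proof.
move=> bU; apply: eq_card0 => S; rewrite !inE.
apply/negP => /andP[/eqP hS sUS]; have := subset_leq_card sUS; lia.
Qed.

Lemma count_sup (R : realType) m1 (U : {set 'I_m1}) b : (b <= m1)%N -> (0 < m1)%N ->
  #|[set S : {set 'I_m1} | (#|S| == b) && (U \subset S)]|%:R <=
  'C(m1, b)%:R * (b%:R / m1%:R) ^+ #|U| :> R.
Proof.
move=> bm m0.
have hge : 0 <= 'C(m1, b)%:R * (b%:R / m1%:R) ^+ #|U| :> R.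
  by rewrite mulr_ge0 // exprn_ge0 // divr_ge0.
have [Ub|bU] := leqP #|U| b; last by rewrite count_sup_le0.
apply: (le_trans (y := 'C(m1 - #|U|, b - #|U|)%:R)).
  by rewrite ler_nat count_sup_nat.
have m0' : 0 < (m1%:R : R) ^+ #|U| by rewrite exprn_gt0 // ltr0n.
rewrite expr_div_n mulrA ler_pdivlMr //.
rewrite -!natrX -!natrM ler_nat.
exact: binom_ratio_nat.
Qed.

Lemma hyper (R : realType) m1 (V : {set 'I_m1}) b (mu : R) :
  0 <= mu -> (b <= m1)%N -> (0 < m1)%N ->
  \sum_(S : {set 'I_m1} | #|S| == b) (1 + mu) ^+ #|S :&: V| <=
  'C(m1, b)%:R * (1 + mu * (b%:R / m1%:R)) ^+ #|V|.
Proof.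
move=> mu0 bm m0.
under eq_bigr do rewrite -sum_subsets.
rewrite (exchange_big_dep (fun U : {set 'I_m1} => U \subset V)) /=; last first.
  by move=> S U _ h; apply: fintype.subset_trans h (finset.subsetIr _ _).
rewrite (_ : (1 + mu * (b%:R / m1%:R)) ^+ #|V| = \sum_(U : {set 'I_m1} | U \subset V) (mu * (b%:R / m1%:R)) ^+ #|U|); last by rewrite sum_subsets.
rewrite big_distrr /=.
apply: ler_sum => U UV.
rewrite sumr_const.
have -> : #|[pred S : {set 'I_m1} | (#|S| == b) && (U \subset S :&: V)]| =
          #|[set S : {set 'I_m1} | (#|S| == b) && (U \subset S)]|.
  apply: eq_card => S; rewrite !inE finset.subsetI UV andbT //.
rewrite -[X in X <= _]mulr_natr exprMn mulrCA.
apply: ler_wpM2l; first exact: exprn_ge0.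
exact: count_sup.
Qed.

Lemma card_bigcup_le (T I : finType) (P : pred I) (F : I -> {set T}) :
  (#|\bigcup_(i | P i) F i| <= \sum_(i | P i) #|F i|)%N.
Proof.
apply: (big_ind2 (fun (X : {set T}) n => #|X| <= n)%N) => //.
  by rewrite cards0.
move=> X1 n1 X2 n2 h1 h2; apply: leq_trans (leq_card_setU X1 X2) _.
exact: leq_add.
Qed.

Section Seq.
Variables (m1 m2 : nat).
Implicit Types (W K : {set 'I_m2}) (j js : 'I_m2) (A : 'M[bool]_(m1, m2)) (S : {set 'I_m1}).

Definition Vset (W K : {set 'I_m2}) (j : 'I_m2) (A : 'M[bool]_(m1, m2)) : {set 'I_m1} :=
  \bigcup_(j' in W :|: [set j'' in K | (j'' < j)%N]) col_supp A j'.
Definition Yv W K j A := #|col_supp A j :&: Vset W K j A|.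

Lemma Vset_updc W K j A js S :
  js \notin W :|: [set j'' in K | (j'' < j)%N] ->
  Vset W K j (updc A js S) = Vset W K j A.
Proof.
move=> hn; apply: eq_bigr => j' hj'; apply: col_updc_neq.
by apply: contraNneq hn => <-.
Qed.

Lemma Vset_card (b : 'I_m2 -> nat) Bn W K j A :
  Omega_b b A -> (forall i, b i <= Bn)%N ->
  (#|Vset W K j A| <= #|W :|: K| * Bn)%N.
Proof.
move=> /forallP hA hB.
apply: leq_trans (card_bigcup_le _ _) _.
apply: (@leq_trans (\sum_(j' in W :|: [set j'' in K | (j'' < j)%N]) Bn)).
  by apply: leq_sum => j' _; rewrite (eqP (hA j')).
rewrite sum_nat_const leq_mul2r; apply/orP; right.
apply: subset_leq_card; apply/fintype.subsetP => x; rewrite !inE.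
by case/orP => [->//|/andP[->]]; rewrite orbT.
Qed.

Lemma seq_bound (R : realType) (b : 'I_m2 -> nat) Bn n2 W (mu : R) :
  0 <= mu -> (0 < m1)%N -> (forall i, b i <= Bn)%N -> (forall i, b i <= m1)%N ->
  forall K, [disjoint W & K] -> (#|W :|: K| <= n2)%N ->
  \sum_(A | Omega_b b A) \prod_(j in K) (1 + mu) ^+ Yv W K j A <=
  (\sum_(A : 'M[bool]_(m1, m2) | Omega_b b A) 1) * ((1 + mu * (Bn%:R / m1%:R)) ^+ (n2 * Bn)) ^+ #|K|.
Proof.
move=> mu0 m0 hB hbm.
set rho := (1 + mu * _) ^+ _.
have lam0 : 0 <= 1 + mu by rewrite addr_ge0.
move=> K; move: {2}#|K| (erefl #|K|) => n; elim: n K => [|n IH] K cK dWK cWK.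
  have -> : K = finset.set0 by apply/eqP; rewrite -cards_eq0 cK.
  by under eq_bigr do rewrite big_set0; rewrite cards0 expr0 mulr1.
have [j0 j0K] : exists j0, j0 \in K by apply/set0Pn; rewrite -card_gt0 cK.
case: (@arg_maxnP _ j0 (mem K) val j0K) => js jsK0 jsmax.
have jsK : js \in K := jsK0.
set K' := K :\ js.
have cK' : #|K'| = n by move: cK; rewrite (cardsD1 js K) jsK => -[].
have dWK' : [disjoint W & K'] by apply: disjointWr dWK; apply: subsetDl.
have cWK' : (#|W :|: K'| <= n2)%N.
  by apply: leq_trans _ cWK; apply: subset_leq_card; apply: finset.setUS; apply: subsetDl.
have jsW : js \notin W by rewrite (disjointFl dWK jsK).
have F1 : forall j A, j \in K' -> Yv W K j A = Yv W K' j A.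
  move=> j A; rewrite !inE => /andP[jne jK]; rewrite /Yv /Vset.
  congr (#|_ :&: _|); apply: eq_bigl => j'; rewrite !inE.
  case: (j' \in W) => //=; case: (eqVneq j' js) => [->|] //=.
  rewrite jsK /=; have := jsmax j jK; rewrite /= => h; apply/negbTE; rewrite -leqNgt //.
have F2 : forall j A S, j \in K' -> Yv W K' j (updc A js S) = Yv W K' j A.
  move=> j A S jK'; have jne : j != js by move: jK'; rewrite !inE => /andP[].
  rewrite /Yv col_updc_neq // Vset_updc // !inE negb_or jsW /= eqxx //.
have F3 : forall A S, Yv W K js (updc A js S) = #|S :&: Vset W K js A|.
  by move=> A S; rewrite /Yv col_updc_eq Vset_updc // !inE negb_or jsW /= ltnn andbF.
set P := [set S : {set 'I_m1} | #|S| == b js].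
have Ppos : 0 < #|P|%:R :> R by rewrite /P card_draws card_ord ltr0n bin_gt0 hbm.
set H := fun A => \prod_(j in K') (1 + mu) ^+ Yv W K' j A.
have H0 : forall A, 0 <= H A by move=> A; apply: prodr_ge0 => j _; apply: exprn_ge0.
have E1 : forall A, \prod_(j in K) (1 + mu) ^+ Yv W K j A = (1+mu) ^+ Yv W K js A * H A.
  move=> A; rewrite (bigD1 js) //=; congr (_ * _); apply: eq_big => j.
    by rewrite !inE andbC.
  by move=> h; rewrite F1 // !inE andbC.
have HU : forall A S, H (updc A js S) = H A.
  by move=> A S; apply: eq_bigr => j jK'; rewrite F2.
under eq_bigr do rewrite E1.
rewrite -(ler_pM2r Ppos) big_distrl /= (fubini_col b (fun A => (1 + mu) ^+ Yv W K js A * H A) js) -/P.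
apply: (@le_trans _ _ (\sum_(A | Omega_b b A) H A * (#|P|%:R * rho))).
  apply: ler_sum => A hA.
  under eq_bigr do rewrite F3 HU.
  rewrite -big_distrl /= mulrC; apply: ler_wpM2l => //.
  rewrite (eq_bigl (fun S : {set 'I_m1} => #|S| == b js)); last by move=> S; rewrite inE.
  apply: le_trans (@hyper R m1 (Vset W K js A) (b js) mu mu0 (hbm js) m0) _.
  rewrite /P card_draws card_ord; apply: ler_wpM2l => //.
  apply: (@le_trans _ _ ((1 + mu * (Bn%:R / m1%:R)) ^+ #|Vset W K js A|)).
    apply: lerXn2r; try by rewrite nnegrE addr_ge0 // mulr_ge0 // divr_ge0.
    rewrite lerD2l; apply: ler_wpM2l => //; apply: ler_wpM2r; first by rewrite invr_ge0.
    by rewrite ler_nat.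
  apply: ler_weXn2l; first by rewrite lerDl mulr_ge0 // divr_ge0.
  apply: leq_trans (@Vset_card b Bn W K js A hA hB) _.
  by rewrite leq_mul2r cWK orbT.
rewrite -big_distrl /= cK exprS.
have := IH K' cK' dWK' cWK'; rewrite -/H cK' => hIH.
have rho0 : 0 <= rho by apply: exprn_ge0; rewrite addr_ge0 // mulr_ge0 // divr_ge0.
rewrite (mulrC rho) !mulrA -(mulrA _ _ rho) (mulrC _ rho) mulrA.
apply: ler_wpM2r => //. apply: ler_wpM2r => //.
Qed.
End Seq.

Local Close Scope ring_scope.

Section Det.
Variables (m1 m2 : nat).
Implicit Types (W K Jp : {set 'I_m2}) (j js : 'I_m2) (A : 'M[bool]_(m1, m2)) (S : {set 'I_m1}).

Lemma row_bound (i : 'I_m1) A (J1 J2 : {set 'I_m2}) Jp : Jp \subset J1 -> J1 \subset J2 ->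
  (#|[set j in Jp | A i j]| <=
   2 * #|[set j in Jp | A i j && (i \in Vset (J2 :\: Jp) Jp j A)]| + (i \in I_A A J1 J2))%N.
Proof.
move=> s1 s2.
have sJ2 : Jp \subset J2 := fintype.subset_trans s1 s2.
set W := J2 :\: Jp.
set C := [set j in Jp | A i j].
set Y := [set j in Jp | _].
case: (boolP (i \in I_A A J1 J2)) => hI.
  move: (hI); rewrite inE => /existsP[j0 /andP[j0J1 /andP[Aj0 /forallP hall]]].
  have : C \subset [set j0].
    apply/fintype.subsetP => j; rewrite !inE => /andP[jJp Aj]; apply/negPn/negP => ne.
    by have := hall j; rewrite (fintype.subsetP sJ2 _ jJp) ne /= Aj.
  move/subset_leq_card; rewrite cards1; lia.
case: (boolP [exists w in W, A i w]) => hW.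
  have : C \subset Y.
    move/existsP: hW => [w /andP[wW Aw]].
    apply/fintype.subsetP => j; rewrite !inE => /andP[jJp Aj]; rewrite jJp Aj /=.
    rewrite /Vset; apply/finset.bigcupP; exists w; first by rewrite finset.in_setU wW.
    by rewrite /col_supp inE.
  move/subset_leq_card; lia.
case: (set_0Vmem C) => [->|[j0 j0C]]; first by rewrite cards0.
case: (@arg_minnP _ j0 (mem C) val j0C) => jm jmC0 jmmin.
have jmC : jm \in C := jmC0.
move: (jmC); rewrite inE => /andP[jmJp Ajm].
have CY : C :\ jm \subset Y.
  apply/fintype.subsetP => j; rewrite !inE => /andP[jne /andP[jJp Aj]]; rewrite jJp Aj /=.
  rewrite /Vset; apply/finset.bigcupP; exists jm; last by rewrite /col_supp inE.
  rewrite finset.in_setU; apply/orP; right; rewrite inE jmJp /=.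
  have jC : j \in C by rewrite /C inE jJp Aj.
  have h := jmmin j jC.
  by rewrite ltn_neqAle h andbT; apply: contra jne => /eqP/val_inj ->.
have Y1 : (0 < #|Y|)%N.
  rewrite lt0n; apply/negP => /eqP Y0.
  move/negP: hI; apply; rewrite inE; apply/existsP; exists jm.
  rewrite (fintype.subsetP s1 _ jmJp) Ajm /=; apply/forallP => j; apply/implyP => jJ2.
  apply/implyP => jne; apply/negP => Aj.
  case: (boolP (j \in Jp)) => jJp.
    have jY : j \in Y by apply: (fintype.subsetP CY); rewrite !inE jne jJp Aj.
    have : (0 < #|Y|)%N by apply/card_gt0P; exists j.
    by rewrite Y0.
  move/existsP: hW; apply; exists j; by rewrite !inE jJp jJ2 Aj.
rewrite (cardsD1 jm C) jmC.
have := subset_leq_card CY; lia.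
Qed.

Lemma card_sum_nat (T : finType) (D : {pred T}) (Q : pred T) :
  #|[set x in D | Q x]| = (\sum_(x in D) (Q x : nat))%N.
Proof.
rewrite -sum1_card big_mkcond [RHS]big_mkcond /=; apply: eq_bigr => x _.
by rewrite inE; case: (x \in D); case: (Q x).
Qed.

Lemma det_sum A (J1 J2 : {set 'I_m2}) Jp : Jp \subset J1 -> J1 \subset J2 ->
  (\sum_(j in Jp) #|col_supp A j| <=
   2 * \sum_(j in Jp) Yv (J2 :\: Jp) Jp j A + #|I_A A J1 J2|)%N.
Proof.
move=> s1 s2.
have e1 : forall j, #|col_supp A j| = (\sum_(i in [set: 'I_m1]) (A i j : nat))%N.
  by move=> j; rewrite -card_sum_nat; apply: eq_card => i; rewrite !inE.
have e2 : forall j, Yv (J2 :\: Jp) Jp j A =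
   (\sum_(i in [set: 'I_m1]) ((A i j) && (i \in Vset (J2 :\: Jp) Jp j A) : nat))%N.
  by move=> j; rewrite /Yv -card_sum_nat; apply: eq_card => i; rewrite !inE.
have e3 : #|I_A A J1 J2| = (\sum_(i in [set: 'I_m1]) (i \in I_A A J1 J2 : nat))%N.
  by rewrite -card_sum_nat; apply: eq_card => i; rewrite !inE.
rewrite (eq_bigr _ (fun j _ => e1 j)) (eq_bigr _ (fun j _ => e2 j)).
rewrite e3 exchange_big /= [X in (_ <= 2 * X + _)%N]exchange_big /= big_distrr /= -big_split /=.
apply: leq_sum => i _.
have := row_bound i A s1 s2.
by rewrite !card_sum_nat.
Qed.
End Det.

Local Open Scope ring_scope.

Lemma prod_if_const (R : comNzRingType) n (P : pred 'I_n) (p q : R) :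
  \prod_(i < n) (if P i then p else q) = p ^+ #|[set i | P i]| * q ^+ (n - #|[set i | P i]|).
Proof.
rewrite (bigID P) /=.
rewrite (eq_bigr (fun=> p)); last by move=> i ->.
rewrite [X in _ * X](eq_bigr (fun=> q)); last by move=> i /negbTE ->.
rewrite !prodr_const; congr (_ ^+ _ * _ ^+ _).
  by apply: eq_card => i; rewrite !inE.
have h := cardC [set i | P i]; rewrite card_ord in h.
have e : #|[pred i | ~~ P i]| = #|[predC [set i | P i]]|.
  by apply: eq_card => i; rewrite !inE.
by rewrite e; apply: (canRL (addKn _) h).
Qed.

Lemma weight_const (R : realType) m1 m2 (p : R) (b : 'I_m2 -> nat) (A : 'M[bool]_(m1, m2)) :
  Omega_b b A ->
  bern_weight p A = \prod_(j < m2) (p ^+ b j * (1 - p) ^+ (m1 - b j)).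
Proof.
move=> /forallP hA; rewrite /bern_weight exchange_big /=.
apply: eq_bigr => j _; rewrite prod_if_const.
by have := hA j; rewrite /col_supp => /eqP ->.
Qed.

Lemma expR1_le3 (R : realType) : expR (1 : R) <= 3.
Proof.
have h1 : 1 + (- 6^-1) <= expR (- 6^-1 : R) := expR_ge1Dx _.
have h2 : ((5 / 6) : R) ^+ 6 <= expR (- 6^-1 : R) ^+ 6.
  apply: lerXn2r; [by rewrite nnegrE | by rewrite nnegrE expR_ge0 | ].
  by apply: le_trans h1; lra.
rewrite -expRM_natl in h2.
have e6 : (6 * - 6^-1 : R) = -1 by field.
rewrite e6 in h2.
move: h2; rewrite expRN => h2.
have e0 : 0 < expR (1 : R) := expR_gt0 _.
have : 3^-1 <= (expR (1:R))^-1.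
  apply: le_trans h2; rewrite -[X in X <= _]mulr1. lra.
rewrite lef_pV2 ?posrE //.
Qed.

Unset Implicit Arguments.

Theorem lemma4p7 (R : realType) :
  exists C_hg : R, 1 < C_hg /\
  forall (m1 m2 : nat) (p : R) (b : 'I_m2 -> nat)
         (J1 J2 : {set 'I_m2}) (r : R),
    0 < p < 1 ->
    (forall i, (b i <= m1)%N) ->
    J1 != finset.set0 -> J1 \subset J2 ->
    0 < r ->
    (#|J1|%:R / 2 <= #|[set j in J1 | r <= (b j)%:R]|%:R :> R) ->
    #|J2|%:R * (24 * (bmax b)%:R ^+ 2 / m1%:R) <= r ->
    bern_cond_prob p
      [pred A : 'M[bool]_(m1, m2) | #|I_A A J1 J2|%:R < #|J1|%:R * r / 4]
      (@Omega_b m1 m2 b)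
    <= C_hg `^ (#|J1|%:R / 2) *
       expR (- ln (r / (24 * #|J2|%:R * (bmax b)%:R ^+ 2 / m1%:R))
               * (r * #|J1|%:R / 8)).
Proof.
exists 2; split; first lra.
move=> m1 m2 p b J1 J2 r /andP[p0 p1] hbm hJ1 hJ12 r0 hhalf hq.
set Jp := [set j in J1 | r <= (b j)%:R] in hhalf.
set W := J2 :\: Jp.
set Bn := bmax b in hq *.
set kR : R := #|J1|%:R in hhalf *.
set kpR : R := #|Jp|%:R in hhalf.
set n2R : R := #|J2|%:R in hq *.
set BR : R := Bn%:R in hq *.
set mR : R := m1%:R in hq *.
have sJp1 : Jp \subset J1 by apply/fintype.subsetP => j; rewrite inE => /andP[].
have sJp2 : Jp \subset J2 := fintype.subset_trans sJp1 hJ12.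
have k1 : (0 < #|J1|)%N by rewrite card_gt0.
have kR1 : 1 <= kR by rewrite /kR ler1n.
have kp0 : (0 < #|Jp|)%N.
  rewrite -(ltr0n R) -/kpR; apply: lt_le_trans hhalf; lra.
have [j1 j1Jp] : exists j, j \in Jp by apply/card_gt0P.
have rB : r <= BR.
  move: (j1Jp); rewrite inE => /andP[_ h]; apply: (le_trans h).
  by rewrite /BR ler_nat /Bn /bmax; apply: leq_bigmax.
have hB : forall i, (b i <= Bn)%N by move=> i; rewrite /Bn /bmax; apply: leq_bigmax.
have Bm : (Bn <= m1)%N by apply/bigmax_leqP => i _; exact: hbm i.
have BR0 : 0 < BR by apply: lt_le_trans rB.
have m0 : (0 < m1)%N by rewrite -(ltr0n R); apply: lt_le_trans BR0 _; rewrite /BR ler_nat.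
have mR0 : 0 < mR by rewrite /mR ltr0n.
have n2k : (#|J1| <= #|J2|)%N by apply: subset_leq_card.
have kkp : kpR <= kR by rewrite /kpR /kR ler_nat; apply: subset_leq_card.
have n2R1 : 1 <= n2R by rewrite /n2R ler1n; apply: leq_trans k1 n2k.
set q := 24 * n2R * BR ^+ 2 / mR.
have q0 : 0 < q by rewrite /q divr_gt0 // mulr_gt0 // ?mulr_gt0 // ?exprn_gt0 //; lra.
have qr : q <= r by move: hq; rewrite /q -!mulrA mulrCA.
set X := r / q.
have X1 : 1 <= X by rewrite /X ler_pdivlMr // mul1r.
have X0 : 0 < X by lra.
have XE : X * (n2R * BR ^+ 2 / mR) = r / 24.
  rewrite /X /q; field; repeat split; lra.
set Ev := [pred A : 'M[bool]_(m1, m2) | #|I_A A J1 J2|%:R < kR * r / 4].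
set NO := \sum_(A : 'M[bool]_(m1, m2) | Omega_b b A) (1 : R).
set NE := \sum_(A : 'M[bool]_(m1, m2) | Ev A && Omega_b b A) (1 : R).
set T := expR (- ln X * (r * kR / 8)).
have main : NE <= NO * T.
  pose lam : R := 3 * X.
  pose mu : R := lam - 1.
  have mu0 : 0 <= mu by rewrite /mu /lam; lra.
  have lam0 : 0 < lam by rewrite /lam; lra.
  have e1mu : 1 + mu = lam by rewrite /mu addrC subrK.
  have dWJp : [disjoint W & Jp].
    rewrite disjoint_subset; apply/fintype.subsetP => j; rewrite !inE.
    by case/andP => jn _.
  have cWJp : (#|W :|: Jp| <= #|J2|)%N.
    apply: subset_leq_card; apply/fintype.subsetP => j; rewrite finset.in_setU.
    case/orP => [|/(fintype.subsetP sJp2)//]; by rewrite inE => /andP[].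
  have SB := seq_bound (Bn:=Bn) (n2:=#|J2|) mu0 m0 hB hbm dWJp cWJp.
  set t := r * kR / 8.
  have t0 : 0 <= t by rewrite /t; apply: divr_ge0; [apply: mulr_ge0; lra | lra].
  have lnl : 1 + ln X <= ln lam.
    have h3 : (3:R) \in Num.pos by rewrite posrE; lra.
    have hX : X \in Num.pos by rewrite posrE.
    rewrite /lam (lnM h3 hX).
    rewrite lerD2r -[X in X <= _](expRK 1) ler_ln ?posrE ?expR_gt0 //.
      exact: expR1_le3.
  have lnl0 : 0 <= ln lam by apply: ln_ge0; rewrite /lam; lra.
  set E' := expR (- t * ln lam).
  have E'0 : 0 <= E' by apply: expR_ge0.
  have pt : forall A, Omega_b b A -> Ev A ->
      1 <= (\prod_(j in Jp) (1 + mu) ^+ Yv W Jp j A) * E'.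
    move=> A hA hE.
    rewrite prodrXr; set s := (\sum_(j in Jp) Yv W Jp j A)%N.
    have hd := det_sum A sJp1 hJ12.
    have hcol : (\sum_(j in Jp) #|col_supp A j| = \sum_(j in Jp) b j)%N.
      by apply: eq_bigr => j _; move/forallP: hA => /(_ j) /eqP.
    rewrite hcol -/W -/s in hd.
    have hdR : \sum_(j in Jp) (b j)%:R <= 2 * s%:R + (#|I_A A J1 J2|)%:R :> R.
      by have := hd; rewrite -(ler_nat R) natrD natrM natr_sum.
    have hsum : kpR * r <= \sum_(j in Jp) (b j)%:R.
      have : \sum_(j in Jp) r <= \sum_(j in Jp) (b j)%:R.
        by apply: ler_sum => j; rewrite inE => /andP[_ ->].
      by rewrite sumr_const -mulr_natl.
    have hE' : #|I_A A J1 J2|%:R < kR * r / 4 := hE.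
    have hkr : kR / 2 * r <= kpR * r by apply: ler_wpM2r => //; lra.
    have e1 : kR / 2 * r = (kR * r) / 2 by ring.
    have e2 : t = (kR * r) / 8 by rewrite /t; ring.
    have hs : t <= s%:R by lra.
    rewrite e1mu -[X in X ^+ s](lnK (x := lam)) ?posrE // -expRM_natl /E' -expRD.
    apply: le_trans (expR_ge1Dx _); rewrite lerDl.
    have -> : s%:R * ln lam + - t * ln lam = (s%:R - t) * ln lam by ring.
    by apply: mulr_ge0 => //; lra.
  apply: (@le_trans _ _ (\sum_(A | Ev A && Omega_b b A) (\prod_(j in Jp) (1 + mu) ^+ Yv W Jp j A) * E')).
    by apply: ler_sum => A /andP[hE hA]; apply: pt.
  apply: (@le_trans _ _ (\sum_(A | Omega_b b A) (\prod_(j in Jp) (1 + mu) ^+ Yv W Jp j A) * E')).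
    rewrite [X in _ <= X](bigID Ev) /=.
    rewrite (eq_bigl (fun A => Omega_b b A && Ev A)); last by move=> A; rewrite andbC.
    rewrite lerDl; apply: sumr_ge0 => A _; apply: mulr_ge0 => //.
    by apply: prodr_ge0 => j _; apply: exprn_ge0; lra.
  rewrite -big_distrl /=.
  apply: le_trans (ler_wpM2r E'0 SB) _.
  rewrite -mulrA; apply: ler_wpM2l; first by apply: sumr_ge0 => A _; lra.
  set x := mu * (Bn%:R / m1%:R).
  have x0 : 0 <= x by rewrite /x mulr_ge0 // divr_ge0.
  rewrite -exprM.
  apply: (@le_trans _ _ (expR (((#|J2| * Bn) * #|Jp|)%N%:R * x) * E')).
    apply: ler_wpM2r => //; rewrite expRM_natl; apply: lerXn2r.
    - by rewrite nnegrE; lra.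
    - by rewrite nnegrE expR_ge0.
    - exact: expR_ge1Dx.
  rewrite /E' /T -expRD ler_expR -/t.
  set Z := n2R * BR ^+ 2 / mR.
  have hN : (#|J2| * Bn * #|Jp|)%:R * x = kpR * mu * Z.
    by rewrite /x /Z /kpR /n2R /BR /mR !natrM; ring.
  have hZ0 : 0 <= Z by rewrite /Z; apply: divr_ge0; [apply: mulr_ge0; [lra|apply: exprn_ge0; lra]|lra].
  have h1 : mu * Z <= lam * Z by apply: ler_wpM2r => //; rewrite /mu; lra.
  have h2 : lam * Z = 3 * (r / 24) by rewrite /lam /Z -XE; ring.
  have kp0R : 0 <= kpR by rewrite /kpR ler0n.
  have h3 : kpR * (mu * Z) <= kpR * (lam * Z) by apply: ler_wpM2l.
  have h4 : kpR * r <= kR * r by apply: ler_wpM2r => //; lra.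
  have h5 : t * (1 + ln X) <= t * ln lam by apply: ler_wpM2l.
  have e3 : t = kR * r / 8 by rewrite /t; ring.
  rewrite hN.
  have e4 : kpR * mu * Z = kpR * (mu * Z) by ring.
  have e5 : kpR * (lam * Z) = kpR * r / 8 by rewrite h2; field.
  have e6 : t * (1 + ln X) = t + t * ln X by ring.
  have e7 : - ln X * t = - (t * ln X) by ring.
  have e8 : - t * ln lam = - (t * ln lam) by ring.
  rewrite e4 e8 e7; lra.
set w0 := \prod_(j < m2) (p ^+ b j * (1 - p) ^+ (m1 - b j)).
have w00 : 0 < w0.
  by apply: prodr_gt0 => j _; apply: mulr_gt0; apply: exprn_gt0; lra.
have PE : bern_prob p [pred A | Ev A && Omega_b b A] = w0 * NE.
  rewrite /bern_prob /NE big_distrr /=; apply: eq_bigr => A /andP[_ hA].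
  by rewrite mulr1 (weight_const p hA).
have PO : bern_prob p (@Omega_b m1 m2 b) = w0 * NO.
  rewrite /bern_prob /NO big_distrr /=; apply: eq_bigr => A hA.
  by rewrite mulr1 (weight_const p hA).
have T0 : 0 <= T by apply: expR_ge0.
have C1 : 1 <= 2 `^ (kR / 2) :> R.
  rewrite -[X in X <= _](powRr0 2); apply: ler_powR; lra.
have TT : T <= 2 `^ (kR / 2) * T by rewrite ler_peMl.
rewrite /bern_cond_prob PE PO.
have NO0 : 0 <= NO by apply: sumr_ge0 => A _; lra.
case: (eqVneq NO 0) => [NOe|NOn].
  rewrite NOe mulr0 invr0 mulr0; apply: mulr_ge0 => //; exact: powR_ge0.
have NOp : 0 < NO by rewrite lt_neqAle eq_sym NOn NO0.
rewrite ler_pdivrMr ?mulr_gt0 //.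
apply: (@le_trans _ _ (w0 * (NO * T))).
  by apply: ler_wpM2l => //; apply: ltW.
rewrite [X in X <= _]mulrA [X in X <= _]mulrC; apply: ler_wpM2r => //.
by apply: mulr_ge0 => //; apply: ltW.
Qed.
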